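(* Let $p$ be an odd prime and let $X$ be a finite family of $4p-3$ lattice points in $\mathbb{Z}^2$ (repetitions allowed). Then (a) $-1+(p,X)-(2p,X)+(3p,X)\equiv 0 \pmod p$, and (b) $(p-1,X)-(2p-1,X)+(3p-1,X)\equiv 0 \pmod p$.
   Context: For a finite family $X$ of lattice points in $\mathbb{Z}^2$ (points may repeat; subsets are subfamilies, i.e. subsets of the index set) and an integer $n\ge 0$, $(n,X)$ denotes the number of $n$-element subfamilies of $X$ whose coordinatewise sum is congruent to $(0,0)$ modulo $p$. *)

(* Defs.v *)
From mathcomp Require Import all_boot all_order all_algebra.
Set Implicit Arguments. Unset Strict Implicit. Unset Printing Implicit Defensive.
Import GRing.Theory Num.Theory.
Local Open Scope ring_scope.

(* A finite family of N lattice points in Z^2 is a map X : 'I_N -> int * int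
   (repetitions allowed; subfamilies = subsets of the index set 'I_N).
   subfam_count p n X = (n, X): the number of n-element subsets S of the
   index set whose coordinatewise sum is congruent to (0,0) modulo p. *)
Definition subfam_count (p n N : nat) (X : 'I_N -> int * int) : nat :=
  #|[set S : {set 'I_N} |
      [&& #|S| == n,
          (p%:Z %| \sum_(i in S) (X i).1)%Z &
          (p%:Z %| \sum_(i in S) (X i).2)%Z]]|.

(* Main.v *)
Require Import Defs.
From mathcomp Require Import all_boot all_order all_algebra.
From mathcomp Require Import all_field.
From mathcomp Require Import zify ring.
Import GRing.Theory Num.Theory.
Local Open Scope ring_scope.
Set Implicit Arguments. Unset Strict Implicit.

Section Deg.
Variables (I : finType) (R : comNzRingType).

Definition has_deg (d : nat) (g : {set I} -> R) :=
  exists F : {set I} -> R, (forall T : {set I}, (d < #|T|)%N -> F T = 0) /\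
   forall S, g S = \sum_(T : {set I}) F T * (T \subset S)%:R.

Lemma sum_eq1 (a : {set I}) (y : {set I} -> R) :
  \sum_V ((V == a)%:R * y V) = y a.
Proof.
rewrite (bigD1 a) //= eqxx mul1r big1 ?addr0 // => V /negbTE ->.
by rewrite mul0r.
Qed.

Lemma deg_ext d g h : (forall S, g S = h S) -> has_deg d g -> has_deg d h.
Proof. by move=> e [F [hF hg]]; exists F; split => // S; rewrite -e hg. Qed.

Lemma deg_const d c : has_deg d (fun _ => c).
Proof.
exists (fun T => if T == set0 then c else 0); split.
  by move=> T; case: eqP => // ->; rewrite cards0.
move=> S; rewrite (bigD1 set0) //= eqxx sub0set mulr1 big1 ?addr0 //.
by move=> T /negbTE ->; rewrite mul0r.
Qed.

Lemma deg_add d g h : has_deg d g -> has_deg d h ->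
  has_deg d (fun S => g S + h S).
Proof.
move=> [F [hF hg]] [G [hG hh]]; exists (fun T => F T + G T); split.
  by move=> T hT; rewrite hF ?hG ?addr0.
by move=> S; rewrite hg hh -big_split /=; apply: eq_bigr => T _; rewrite mulrDl.
Qed.

Lemma deg_opp d g : has_deg d g -> has_deg d (fun S => - g S).
Proof.
move=> [F [hF hg]]; exists (fun T => - F T); split.
  by move=> T hT; rewrite hF ?oppr0.
by move=> S; rewrite hg -sumrN; apply: eq_bigr => T _; rewrite mulNr.
Qed.

Lemma deg_mul d e g h : has_deg d g -> has_deg e h ->
  has_deg (d + e) (fun S => g S * h S).
Proof.
move=> [F [hF hg]] [G [hG hh]].
exists (fun V => \sum_T \sum_U ((V == T :|: U)%:R * (F T * G U))); split.
  move=> V hV; apply: big1 => T _; apply: big1 => U _.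
  case: eqP => [eV|]; last by rewrite mul0r.
  have hTU : (d + e < #|T| + #|U|)%N.
    by apply: (leq_trans hV); rewrite eV cardsU; exact: leq_subr.
  case: (ltnP d #|T|) => [hT | hT]; first by rewrite hF // mul0r mulr0.
  have hU : (e < #|U|)%N by lia.
  by rewrite hG // !mulr0.
move=> S; rewrite hg hh big_distrlr /=.
rewrite [RHS](eq_bigr (fun V => \sum_T \sum_U
   ((V == T :|: U)%:R * (F T * G U) * (V \subset S)%:R))); last first.
  by move=> V _; rewrite mulr_suml; apply: eq_bigr => T _; rewrite mulr_suml.
rewrite [RHS]exchange_big /=; apply: eq_bigr => T _.
rewrite [RHS]exchange_big /=; apply: eq_bigr => U _.
under eq_bigr => V _ do rewrite -mulrA.
have := sum_eq1 (T :|: U) (fun V => F T * G U * (V \subset S)%:R); rewrite /= => ->.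
rewrite subUset.
by case: (T \subset S); case: (U \subset S); rewrite ?mulr0 ?mulr1 ?mul0r ?mulr0.
Qed.

Lemma deg_exp d g k : has_deg d g -> has_deg (d * k) (fun S => g S ^+ k).
Proof.
move=> H; elim: k => [|k IH].
  by rewrite muln0; apply: (deg_ext _ (deg_const 0 1)) => S; rewrite expr0.
rewrite mulnS; apply: (deg_ext _ (deg_mul H IH)) => S; by rewrite exprS.
Qed.

Lemma deg_lin (c : I -> R) : has_deg 1 (fun S => \sum_(i in S) c i).
Proof.
exists (fun T => \sum_i (T == [set i])%:R * c i); split.
  move=> T hT; apply: big1 => i _; case: eqP hT => [->|]; first by rewrite cards1.
  by rewrite mul0r.
move=> S.
rewrite (eq_bigr (fun T => \sum_i ((T == [set i])%:R * (c i * (T \subset S)%:R))));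
  last by move=> T _; rewrite mulr_suml; apply: eq_bigr => i _; rewrite mulrA.
rewrite exchange_big /= big_mkcond /=; apply: eq_bigr => i _.
have := sum_eq1 [set i] (fun T => c i * (T \subset S)%:R); rewrite /= => ->.
rewrite sub1set.
by case: (i \in S); rewrite ?mulr1 ?mulr0.
Qed.

Lemma alt_sum (T : {set I}) : T != setT ->
  \sum_(S : {set I}) (T \subset S)%:R * (-1) ^+ #|S| = 0 :> R.
Proof.
move=> nT.
have : ~~ ([set: I] \subset T) by rewrite subTset.
case/subsetPn => i _ niT.
rewrite (bigID (fun S : {set I} => i \in S)) /=.
rewrite (reindex_onto (fun S : {set I} => i |: S) (fun S : {set I} => S :\ i)) /=; last first.
  by move=> S iS; rewrite setD1K.
apply/eqP; rewrite addr_eq0; apply/eqP; rewrite -sumrN.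
apply: eq_big => S.
  rewrite setU11 /=; apply/eqP/idP => [<-|niS]; first by rewrite setD11.
  by rewrite setU1K.
move=> /andP [_ /eqP eS]; have niS : i \notin S by rewrite -eS setD11.
rewrite cardsU1 niS add1n exprS mulN1r mulrN.
have -> : (T \subset i |: S) = (T \subset S); last by [].
apply/idP/idP => h; last exact: subset_trans h (subsetU1 _ _).
apply/subsetP => x xT; move/subsetP: h => /(_ x xT); rewrite in_setU1.
case/orP => // /eqP xi; by rewrite -xi xT in niT.
Qed.

Lemma deg_vanish d g : has_deg d g -> (d < #|I|)%N ->
  \sum_(S : {set I}) (-1) ^+ #|S| * g S = 0.
Proof.
move=> [F [hF hg]] hd.
under eq_bigr => S _ do rewrite hg mulr_sumr.
rewrite exchange_big /=; apply: big1 => T _.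
case: (eqVneq T setT) => [->|nT].
  by apply: big1 => S _; rewrite hF ?cardsT // mul0r mulr0.
transitivity (F T * \sum_(S : {set I}) (T \subset S)%:R * (-1) ^+ #|S|);
  last by rewrite alt_sum // mulr0.
rewrite mulr_sumr.
by apply: eq_bigr => S _; rewrite mulrCA [_ * (-1) ^+ _]mulrC.
Qed.

End Deg.

Section Main.
Variables (p : nat) (hp : prime p).

Lemma fermatF (x : 'F_p) : x ^+ p.-1 = (x != 0)%:R.
Proof.
have p1 := prime_gt1 hp.
case: eqP => [->|/eqP nx].
  rewrite expr0n ?eqxx /=; have -> : (p.-1 == 0%N) = false by apply/eqP; lia.
  done.
have := expf_card x; rewrite card_Fp // => h.
have h2 : x * x ^+ p.-1 = x * 1 by rewrite -exprS prednK ?prime_gt0 // h mulr1.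
exact: (mulfI nx h2).
Qed.

Lemma one_minus (x : 'F_p) : 1 - x ^+ p.-1 = (x == 0)%:R.
Proof. by rewrite fermatF; case: (x == 0); rewrite ?subr0 ?subrr. Qed.

Lemma intr_sum (n : nat) (A : {set 'I_n}) (z : 'I_n -> int) :
  (\sum_(i in A) z i)%:~R = \sum_(i in A) ((z i)%:~R : 'F_p).
Proof. exact: (big_morph (fun t : int => (t%:~R : 'F_p)) (@intrD _) (mulr0z _)). Qed.

Lemma main_sum (n : nat) (Y : 'I_n -> int * int) (e : nat) : (3 * p.-1 < n)%N ->
  \sum_(S : {set 'I_n}) (-1) ^+ #|S| *
    ([&& (p %| #|S| + e)%N, (p%:Z %| \sum_(i in S) (Y i).1)%Z
       & (p%:Z %| \sum_(i in S) (Y i).2)%Z])%:R = 0 :> 'F_p.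
Proof.
move=> hn.
pose W (S : {set 'I_n}) := (1 - (\sum_(i in S) (1 : 'F_p) + e%:R) ^+ p.-1)
   * (1 - (\sum_(i in S) ((Y i).1)%:~R + 0) ^+ p.-1)
   * (1 - (\sum_(i in S) ((Y i).2)%:~R + 0) ^+ p.-1).
have hl : forall (c : 'I_n -> 'F_p) (z : 'F_p),
    has_deg p.-1 (fun S : {set 'I_n} => 1 - (\sum_(i in S) c i + z) ^+ p.-1).
  move=> c z; apply: deg_add; first exact: deg_const.
  apply: deg_opp; move: (deg_exp p.-1 (deg_add (deg_lin c) (@deg_const _ _ 1 z))).
  by rewrite mul1n.
have hW : has_deg (p.-1 + p.-1 + p.-1) W.
  exact: (deg_mul (deg_mul (hl _ _) (hl _ _)) (hl _ _)).
have := deg_vanish hW; rewrite card_ord => /(_ ltac:(lia)) H; rewrite -[RHS]H.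
apply: eq_bigr => S _; congr (_ * _).
rewrite /W !addr0 !one_minus sumr_const -natrD -!intr_sum.
rewrite -(dvdn_pcharf (pchar_Fp hp)) -!(dvdz_pcharf (pchar_Fp hp)).
by case: (p %| _)%N; case: (_ %| _)%Z; case: (_ %| _)%Z; rewrite ?mulr0 ?mul0r ?mulr1.
Qed.

End Main.

Ltac fixb := repeat (match goal with |- context [(?a == ?b)%N] =>
  let E := fresh "E" in
  first [ have E : (a == b)%N = true by apply/eqP; lia
        | have E : (a == b)%N = false by apply/eqP; lia ]; rewrite E; clear E end).

Lemma L0 (R : comNzRingType) (p k : nat) : prime p -> odd p -> (k <= 4 * p - 3)%N ->
  ((-1) ^+ k * (p %| k + 0)%N%:R : R) =
  (k == 0)%N%:R - (k == p)%N%:R + (k == 2 * p)%N%:R - (k == 3 * p)%N%:R.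
Proof.
move=> hp ho hk; rewrite addn0; have p1 := prime_gt1 hp.
case: (boolP (p %| k)%N) => [/dvdnP [q hq] | nd].
  have hq4 : (q < 4)%N.
    case: (leqP 4 q) => // h; have := leq_mul h (leqnn p); lia.
  subst k; rewrite -signr_odd oddM ho andbT.
  case: q hq4 hk => [|[|[|[|q]]]] // _ _; fixb; simpl; ring.
rewrite mulr0.
have -> : (k == 0)%N = false by apply/eqP => E; rewrite E dvdn0 in nd.
have -> : (k == p)%N = false by apply/eqP => E; rewrite E dvdnn in nd.
have -> : (k == 2 * p)%N = false by apply/eqP => E; rewrite E dvdn_mull in nd.
have -> : (k == 3 * p)%N = false by apply/eqP => E; rewrite E dvdn_mull in nd.
simpl; ring.
Qed.

Lemma L1 (R : comNzRingType) (p k : nat) : prime p -> odd p -> (k <= 4 * p - 3)%N ->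
  ((-1) ^+ k * (p %| k + 1)%N%:R : R) =
  (k == p - 1)%N%:R - (k == 2 * p - 1)%N%:R + (k == 3 * p - 1)%N%:R.
Proof.
move=> hp ho hk; rewrite addn1; have p1 := prime_gt1 hp.
case: (boolP (p %| k.+1)%N) => [/dvdnP [q hq] | nd].
  have hq4 : (q < 4)%N.
    case: (leqP 4 q) => // h; have := leq_mul h (leqnn p); lia.
  have ok : odd k = ~~ odd (q * p) by rewrite -hq /= negbK.
  rewrite -signr_odd ok oddM ho andbT.
  clear ok; case: q hq hq4 => [|[|[|[|q]]]] // hq _; fixb; simpl; ring.
rewrite mulr0.
have -> : (k == p - 1)%N = false.
  by apply/eqP => E; move: nd; rewrite (_ : k.+1 = 1 * p) ?dvdn_mull //; lia.
have -> : (k == 2 * p - 1)%N = false.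
  by apply/eqP => E; move: nd; rewrite (_ : k.+1 = 2 * p) ?dvdn_mull //; lia.
have -> : (k == 3 * p - 1)%N = false.
  by apply/eqP => E; move: nd; rewrite (_ : k.+1 = 3 * p) ?dvdn_mull //; lia.
simpl; ring.
Qed.

Lemma sum_indic (R : comNzRingType) (T : finType) (P : pred T) :
  \sum_(t : T) ((P t)%:R : R) = #|[set t | P t]|%:R.
Proof.
rewrite -natr_sum; congr (_%:R).
rewrite -sum1_card [RHS]big_mkcond /=; apply: eq_bigr => t _; by rewrite inE; case: (P t).
Qed.

Lemma natb_and (R : comNzRingType) (c b : bool) : ((c && b)%:R : R) = c%:R * b%:R.
Proof. by case: c; case: b; rewrite ?mul1r ?mul0r. Qed.

Lemma count0 (p N : nat) (X : 'I_N -> int * int) : subfam_count p 0 X = 1%N.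
Proof.
rewrite /subfam_count (_ : [set S : {set 'I_N} | _] = [set set0]) ?cards1 //.
apply/setP => S; rewrite !inE cards_eq0; case: eqP => [->|] //=.
by rewrite !big_set0 !dvdz0.
Qed.

Theorem corollary5 (p : nat) (hp : prime p) (hodd : odd p)
    (X : 'I_(4 * p - 3) -> int * int) :
  (p%:Z %| (-1 + (subfam_count p p X)%:Z - (subfam_count p (2 * p) X)%:Z
              + (subfam_count p (3 * p) X)%:Z))%Z /\
  (p%:Z %| ((subfam_count p (p - 1) X)%:Z - (subfam_count p (2 * p - 1) X)%:Z
              + (subfam_count p (3 * p - 1) X)%:Z))%Z.
Proof.
have p1 := prime_gt1 hp.
have hb : (3 * p.-1 < 4 * p - 3)%N by lia.
have hk : forall S : {set 'I_(4 * p - 3)}, (#|S| <= 4 * p - 3)%N.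
  by move=> S; rewrite -[X in (_ <= X)%N]card_ord max_card.
have H0 := main_sum hp X 0 hb.
have H1 := main_sum hp X 1 hb.
rewrite !(dvdz_pcharf (pchar_Fp hp)) !(intrD, intrN, intrB) -!pmulrn.
split; apply/eqP.
- rewrite -[RHS]oppr0 -H0.
  rewrite (eq_bigr (fun S : {set 'I_(4 * p - 3)} =>
     [&& #|S| == 0%N, (p%:Z %| \sum_(i in S) (X i).1)%Z & (p%:Z %| \sum_(i in S) (X i).2)%Z]%:R
   - [&& #|S| == p, (p%:Z %| \sum_(i in S) (X i).1)%Z & (p%:Z %| \sum_(i in S) (X i).2)%Z]%:R
   + [&& #|S| == (2 * p)%N, (p%:Z %| \sum_(i in S) (X i).1)%Z & (p%:Z %| \sum_(i in S) (X i).2)%Z]%:R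
   - [&& #|S| == (3 * p)%N, (p%:Z %| \sum_(i in S) (X i).1)%Z & (p%:Z %| \sum_(i in S) (X i).2)%Z]%:R)); last first.
    move=> S _; rewrite natb_and mulrA L0 // ?hk //.
    rewrite !natb_and; ring.
  rewrite !(sumrB, big_split) /= !sum_indic.
  have c0 := count0 p X; rewrite /subfam_count in c0 *; rewrite c0.
  simpl; ring.
- rewrite -[RHS]H1.
  rewrite (eq_bigr (fun S : {set 'I_(4 * p - 3)} =>
     [&& #|S| == (p - 1)%N, (p%:Z %| \sum_(i in S) (X i).1)%Z & (p%:Z %| \sum_(i in S) (X i).2)%Z]%:R
   - [&& #|S| == (2 * p - 1)%N, (p%:Z %| \sum_(i in S) (X i).1)%Z & (p%:Z %| \sum_(i in S) (X i).2)%Z]%:R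
   + [&& #|S| == (3 * p - 1)%N, (p%:Z %| \sum_(i in S) (X i).1)%Z & (p%:Z %| \sum_(i in S) (X i).2)%Z]%:R)); last first.
    move=> S _; rewrite natb_and mulrA L1 // ?hk //.
    rewrite !natb_and; ring.
  by rewrite !(sumrB, big_split) /= !sum_indic.
Qed.
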